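(* Assume the standing hypotheses and definitions in the context. For any $(t_0,y_0)\in\mathbb{R}\times\mathbb{R}^n$, the function $t\mapsto G(t,Y(t,t_0,y_0))$ is a solution of the system $x'=A(t)x+f(t,x)$.
   Context: Standing hypotheses: $A:\mathbb{R}\to\mathbb{R}^{n\times n}$ is continuous and bounded, $T(t,s)$ is the evolution operator of $x'=A(t)x$. $\mu:\mathbb{R}\to(0,\infty)$ is an increasing differentiable growth rate: $\mu(0)=1$, $\lim_{t\to-\infty}\mu(t)=0$, $\lim_{t\to+\infty}\mu(t)=+\infty$. The system $x'=A(t)x$ admits an algebraic dichotomy: projections $P(s)$, $Q(s)=I-P(s)$, constants $K,\alpha>0$ with $T(t,s)P(s)=P(t)T(t,s)$, $\|T(t,s)P(s)\|\le K(\mu(t)/\mu(s))^{-\alpha}$ ($t\ge s$), $\|T(t,s)Q(s)\|\le K(\mu(s)/\mu(t))^{-\alpha}$ ($t\le s$). $f:\mathbb{R}\times\mathbb{R}^n\to\mathbb{R}^n$ is continuous, $\|f(t,x)\|\le\beta\mu'(t)\mu^{-1}(t)$, $\|f(t,x_1)-f(t,x_2)\|\le\gamma\mu'(t)\mu^{-1}(t)\|x_1-x_2\|$ for constants $\beta,\gamma\ge0$, and $6K\gamma\alpha^{-1}<1$. $Y(t,\tau,\xi)$ is the solution of $x'=A(t)x$ with $Y(\tau)=\xi$. For each $(\tau,\xi)$, $g(t,(\tau,\xi))$ denotes the unique solution bounded on $\mathbb{R}$ of $Z'=A(t)Z+f(t,Y(t,\tau,\xi)+Z)$ (it exists and is unique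 under these hypotheses). Define $G(t,y)=y+g(t,(t,y))$. *)

(* Defs.v *)
(* R : realType, vectors are column vectors 'cV[R]_n
   with the (library) sup norm, matrices 'M[R]_n. *)
From HB Require Import structures.
From mathcomp Require Import all_boot all_order all_algebra.
From mathcomp Require Import all_classical all_reals all_analysis.
Set Implicit Arguments. Unset Strict Implicit. Unset Printing Implicit Defensive.
Import Order.TTheory GRing.Theory Num.Theory.
Import numFieldNormedType.Exports.
Local Open Scope ring_scope.

Definition is_solution {R : realType} {n : nat}
  (F : R -> 'cV[R]_n -> 'cV[R]_n) (x : R -> 'cV[R]_n) : Prop :=
  forall t : R, is_derive t (1 : R) x (F t (x t)).

Definition bounded_on_R {R : realType} {n : nat} (x : R -> 'cV[R]_n) : Prop :=
  exists M : R, forall t : R, `|x t| <= M.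

Definition bounded_sol {R : realType} {n : nat}
  (A : R -> 'M[R]_n) (f : R -> 'cV[R]_n -> 'cV[R]_n)
  (Y : R -> R -> 'cV[R]_n -> 'cV[R]_n) (tau : R) (xi : 'cV[R]_n)
  (Z : R -> 'cV[R]_n) : Prop :=
  bounded_on_R Z /\
  is_solution (fun t z => A t *m z + f t (Y t tau xi + z)) Z.

(* Main.v *)
Require Import Defs.
From HB Require Import structures.
From mathcomp Require Import all_boot all_order all_algebra.
From mathcomp Require Import all_classical all_reals all_analysis.
From mathcomp Require Import ring lra.
Import Order.TTheory GRing.Theory Num.Theory.
Import numFieldNormedType.Exports.
Local Open Scope ring_scope.
Local Open Scope classical_set_scope.


Lemma term_bound (R : realType) (M a b c : R) : `|b| <= M ->
  `|2 * a * b * c| <= M * (a * a + c * c).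
Proof.
move=> hb.
have hM : -M <= b <= M by rewrite -ler_norml.
case/andP: hM => h1 h2.
have s1 : 0 <= (a - c) * (a - c) by rewrite -expr2 sqr_ge0.
have s2 : 0 <= (a + c) * (a + c) by rewrite -expr2 sqr_ge0.
have s3 : 0 <= a * a + c * c by rewrite addr_ge0 // -expr2 sqr_ge0.
have p1 : 0 <= (M - b) * (a * a + c * c) by apply: mulr_ge0 => //; lra.
have p2 : 0 <= (M + b) * (a * a + c * c) by apply: mulr_ge0 => //; lra.
have [b0|b0] := leP 0 b.
  have p3 : 0 <= b * ((a - c) * (a - c)) by rewrite mulr_ge0.
  have p4 : 0 <= b * ((a + c) * (a + c)) by rewrite mulr_ge0.
  rewrite ler_norml; apply/andP; split; nra.
have p3 : 0 <= (- b) * ((a - c) * (a - c)) by rewrite mulr_ge0 // oppr_ge0 ltW.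
have p4 : 0 <= (- b) * ((a + c) * (a + c)) by rewrite mulr_ge0 // oppr_ge0 ltW.
rewrite ler_norml; apply/andP; split; nra.
Qed.

Lemma quad_bound (R : realType) n (B : 'M[R]_n) (d : 'cV[R]_n) (M : R) :
  (forall i j, `|B i j| <= M) ->
  `|\sum_i 2 * d i 0 * (B *m d) i 0| <= 2 * M * n%:R * \sum_i d i 0 * d i 0.
Proof.
move=> hB.
apply: le_trans (ler_norm_sum _ _ _) _.
apply: (@le_trans _ _ (\sum_i \sum_j M * (d i 0 * d i 0 + d j 0 * d j 0))).
  apply: ler_sum => i _; rewrite mxE mulr_sumr.
  apply: le_trans (ler_norm_sum _ _ _) _.
  apply: ler_sum => j _; rewrite mulrA; exact: term_bound.
under eq_bigr do rewrite -mulr_sumr big_split /= sumr_const card_ord.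
rewrite -mulr_sumr big_split /= sumr_const card_ord sumrMnl.
set S := \sum_(i < n) d i 0 * d i 0.
rewrite -[S *+ n]mulr_natr le_eqVlt; apply/orP; left; apply/eqP; ring.
Qed.
Lemma expM_derive (R : realType) (h : R -> R) (a s dh : R) :
  is_derive s (1:R) h dh ->
  is_derive s (1:R) (fun x => h x * expR (a * x)) ((dh + a * h s) * expR (a * s)).
Proof.
move=> hh.
have dl : derivable (fun x : R => a * x) s 1.
  have := @is_deriveZ R R R id a s 1 1 (is_derive_id _ _); by case.
have de : derivable (@expR R) (a * s) 1 by exact: ex_derive.
have he : is_derive s (1:R) (fun x => expR (a * x)) (a * expR (a * s)).
  apply: DeriveDef; first by apply/derivable1_diffP; apply: differentiable_comp; apply/derivable1_diffP.
  rewrite -derive1E (derive1_comp dl de) derive1E derive_val derive1E.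
  have -> : 'D_1 (fun x : R => a * x) s = a.
    have := @is_deriveZ R R R id a s 1 1 (is_derive_id _ _).
    move=> H; rewrite (@derive_val _ _ _ _ _ _ _ H) /=. by rewrite /GRing.scale /= mulr1.
  by rewrite mulrC.
have := is_deriveM hh he.
move=> H; apply: is_derive_eq.
rewrite /GRing.scale /=. ring.
Qed.

Lemma entry_le (R : realType) m n (B : 'M[R]_(m, n)) i j : `|B i j| <= `|B|.
Proof.
rewrite [leRHS]/Num.Def.normr/= mx_normrE.
by apply: le_trans (le_bigmax _ _ (i, j)).
Qed.

Lemma comp_derive (R : realType) n (D : R -> 'cV[R]_n) s (d : 'cV[R]_n) i :
  is_derive s (1:R) D d -> is_derive s (1:R) (fun x => D x i 0) (d i 0).
Proof.
move=> hD.
have dv : derivable D s 1 by case: hD.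
have dvi : derivable (fun x => D x i 0) s 1 by move/derivable_mxP: dv; apply.
apply: DeriveDef => //.
have := derive_mx dv; rewrite derive_val => ->.
by rewrite mxE.
Qed.

Lemma lin_uniq (R : realType) n (A : R -> 'M[R]_n) (M : R)
  (hA : forall t, `|A t| <= M) (D : R -> 'cV[R]_n)
  (hD : forall t, is_derive t (1:R) D (A t *m D t)) t0 (h0 : D t0 = 0) :
  forall s, D s = 0.
Proof.
pose h := fun x => \sum_(i < n) D x i 0 * D x i 0.
pose dh := fun x => \sum_(i < n) 2 * D x i 0 * (A x *m D x) i 0.
have hd : forall x, is_derive x (1:R) h (dh x).
  move=> x.
  have -> : h = \sum_(i < n) ((fun y => D y i 0) * (fun y => D y i 0)).
    by apply/funext => y; rewrite /h fct_sumE.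
  have H := is_derive_sum (fun i => is_deriveM (@comp_derive _ _ _ _ _ i (hD x)) (@comp_derive _ _ _ _ _ i (hD x))).
  suff -> : dh x = \sum_(i < n) (D x i 0 *: (A x *m D x) i 0 + D x i 0 *: (A x *m D x) i 0) by exact: H.
  rewrite /dh; apply: eq_bigr => i _.
  rewrite /GRing.scale /=; ring.
pose c := 2 * M * n%:R.
have hb : forall x, `|dh x| <= c * h x.
  move=> x; apply: quad_bound => i j; exact: le_trans (entry_le _ _ _ _ i j) (hA x).
have hge : forall x, 0 <= h x.
  by move=> x; apply: sumr_ge0 => i _; rewrite -expr2 sqr_ge0.
have ht0 : h t0 = 0.
  by rewrite /h h0; apply: big1 => i _; rewrite mxE mulr0.
have hk : forall a x, is_derive x (1:R) (fun y => h y * expR (a * y)) ((dh x + a * h x) * expR (a * x)).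
  by move=> a x; apply: expM_derive.
have dk : forall a x, derivable (fun y => h y * expR (a * y)) x 1.
  by move=> a x; case: (hk a x).
have ck : forall a (i : interval R), {within [set` i], continuous (fun y => h y * expR (a * y))}.
  by move=> a i; apply: derivable_within_continuous => x _; exact: dk.
have hs0 : forall s, h s = 0.
  move=> s; apply/eqP; rewrite eq_le hge andbT.
  have [st|st] := leP t0 s.
    have := @ler0_derive1_nincr R (fun y => h y * expR ((- c) * y)) t0 s
      (fun x _ => dk _ x) _ (ck _ _) t0 s (lexx _) st (lexx _).
    rewrite ht0 mul0r => H.
    have k0 : h s * expR (- c * s) <= 0.
      apply: H => x _; rewrite derive1E (@derive_val _ _ _ _ _ _ _ (hk _ x)).
      apply: mulr_le0_ge0; last exact: expR_ge0.
      have := hb x; rewrite ler_norml => /andP[_ ?]; lra.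
    by rewrite -(pmulr_lle0 _ (expR_gt0 (- c * s))).
  have := @ger0_derive1_ndecr R (fun y => h y * expR (c * y)) s t0
    (fun x _ => dk _ x) _ (ck _ _) s t0 (lexx _) (ltW st) (lexx _).
  rewrite ht0 mul0r => H.
  have k0 : h s * expR (c * s) <= 0.
    apply: H => x _; rewrite derive1E (@derive_val _ _ _ _ _ _ _ (hk _ x)).
    apply: mulr_ge0; last exact: expR_ge0.
    have := hb x; rewrite ler_norml => /andP[? _]; lra.
  by rewrite -(pmulr_lle0 _ (expR_gt0 (c * s))).
move=> s; apply/matrixP => i j; rewrite (ord1 j) mxE.
have := hs0 s; rewrite /h => /psumr_eq0P H.
have /eqP := H (fun k _ => ltac:(by rewrite -expr2 sqr_ge0)) i isT.
by rewrite mulf_eq0 orbb => /eqP.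
Qed.

Theorem lemma3p6 (R : realType) (n : nat)
  (A : R -> 'M[R]_n) (T : R -> R -> 'M[R]_n)
  (mu : R -> R) (P : R -> 'M[R]_n) (K alpha beta gamma : R)
  (f : R -> 'cV[R]_n -> 'cV[R]_n)
  (Y : R -> R -> 'cV[R]_n -> 'cV[R]_n)
  (g : R -> R -> 'cV[R]_n -> 'cV[R]_n)
  (* A continuous and bounded *)
  (hAc : continuous A)
  (hAb : exists M : R, forall t, `|A t| <= M)
  (* T is the evolution operator of x' = A(t) x *)
  (hT0 : forall s, T s s = 1%:M)
  (hTd : forall t s : R, is_derive t (1 : R) (fun u => T u s) (A t *m T t s))
  (* growth rate mu *)
  (hmu_pos : forall t, 0 < mu t)
  (hmu_inc : {homo mu : x y / x < y})
  (hmu_der : forall t : R, derivable mu t 1)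
  (hmu0 : mu 0 = 1)
  (hmu_m : mu x @[x --> -oo] --> 0)
  (hmu_p : mu x @[x --> +oo] --> +oo)
  (* algebraic dichotomy *)
  (hK : 0 < K) (halpha : 0 < alpha)
  (hP : forall s, P s *m P s = P s)
  (hPT : forall t s, T t s *m P s = P t *m T t s)
  (hPb : forall t s (x : 'cV[R]_n), s <= t ->
     `|T t s *m P s *m x| <= K * (mu t / mu s) `^ (- alpha) * `|x|)
  (hQb : forall t s (x : 'cV[R]_n), t <= s ->
     `|T t s *m (1%:M - P s) *m x| <= K * (mu s / mu t) `^ (- alpha) * `|x|)
  (* perturbation f *)
  (hfc : continuous (fun p : R * 'cV[R]_n => f p.1 p.2))
  (hbeta : 0 <= beta) (hgamma : 0 <= gamma)
  (hfb : forall t x, `|f t x| <= beta * (derive1 mu t / mu t))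
  (hfL : forall t x1 x2,
     `|f t x1 - f t x2| <= gamma * (derive1 mu t / mu t) * `|x1 - x2|)
  (hsmall : 6 * K * gamma / alpha < 1)
  (* Y(t, tau, xi): solution of x' = A(t) x with Y(tau) = xi *)
  (hY0 : forall tau xi, Y tau tau xi = xi)
  (hYd : forall tau xi, is_solution (fun t x => A t *m x) (fun t => Y t tau xi))
  (* g(t, (tau, xi)): the unique solution bounded on R of
     Z' = A(t) Z + f(t, Y(t,tau,xi) + Z) *)
  (hg : forall tau xi, bounded_sol A f Y tau xi (fun t => g t tau xi))
  (hgu : forall tau xi Z, bounded_sol A f Y tau xi Z ->
     forall t, Z t = g t tau xi) :
  let G := fun t y => y + g t t y in
  forall (t0 : R) (y0 : 'cV[R]_n),
    is_solution (fun t x => A t *m x + f t x) (fun t => G t (Y t t0 y0)).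
Proof.
move=> G t0 y0.
case: hAb => M hM.
have hYY : forall t s, Y s t (Y t t0 y0) = Y s t0 y0.
  move=> t s.
  have hD : forall x, is_derive x (1:R) (fun s => Y s t (Y t t0 y0) - Y s t0 y0)
      (A x *m (Y x t (Y t t0 y0) - Y x t0 y0)).
    move=> x; rewrite mulmxBr; exact: is_deriveB (hYd _ _ x) (hYd _ _ x).
  have h0 : Y t t (Y t t0 y0) - Y t t0 y0 = 0 by rewrite hY0 subrr.
  have := @lin_uniq R n A M hM (fun s => Y s t (Y t t0 y0) - Y s t0 y0) hD t h0 s.
  by move=> /eqP; rewrite subr_eq0 => /eqP.
have hgg : forall t s, g s t (Y t t0 y0) = g s t0 y0.
  move=> t s; apply/esym; apply: (hgu t (Y t t0 y0) (fun s => g s t0 y0)).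
  case: (hg t0 y0) => hb hs; split => // x.
  by rewrite hYY; exact: hs.
have -> : (fun t => G t (Y t t0 y0)) = (fun t => Y t t0 y0 + g t t0 y0).
  by apply/funext => t; rewrite /G hgg.
move=> t.
case: (hg t0 y0) => _ hs.
have := is_deriveD (hYd _ _ t) (hs t).
by move=> H; rewrite mulmxDr -addrA; exact: H.
Qed.
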